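(* A reaction network $\mathcal R$ is essential if and only if for all $x,x'\in\mathbb{N}_0^n$: if $x$ leads to $x'$ via $\mathcal R$, then $x'$ leads to $x$ via $\mathcal R$.
   Context: A reaction network (RN) is a (possibly infinite) subset $\mathcal R\subseteq\mathbb{N}_0^n\times\mathbb{N}_0^n$ containing no element $(y,y')$ with $y=y'$; elements $(y,y')$ are reactions $y\to y'$. For $r_1=(y_1,y_1'),\ r_2=(y_2,y_2')$ define $r_1\oplus r_2=(y_1+0\vee(y_2-y_1'),\ y_2'+0\vee(y_1'-y_2))$ ($\vee$ componentwise maximum); it is associative. For $A\subseteq\mathbb{N}_0^n\times\mathbb{N}_0^n$, $\mathrm{cl}(A)$ is the set of all finite $\oplus$-sums of elements of $A$, including the empty sum $(0,0)$. For $r=(y,y')$, $r^{-1}=(y',y)$. A set $A$ is reversible if $r\in A$ implies $r^{-1}\in A$, and $A$ is essential if $\mathrm{cl}(A)$ is reversible. An ordered sequence of reactions $y_1\to y_1',\dots,y_m\to y_m'$ is active on $x\in\mathbb{N}_0^n$ if $x+\sum_{i=1}^{k-1}(y_i'-y_i)\ge y_k$ (componentwise) for all $k$. A state $x$ leads to $x'$ via $\mathcal R$ if there is an ordered sequence of $m\ge0$ reactions of $\mathcal R$ (repetitions allowed) active on $x$ with $x'=x+\sum_{i=1}^m(y_i'-y_i)$. *)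

(* Defs.v *)
From mathcomp Require Import all_boot all_order all_algebra.
Set Implicit Arguments. Unset Strict Implicit. Unset Printing Implicit Defensive.
Import GRing.Theory Num.Theory.

Definition state (n : nat) := {ffun 'I_n -> nat}.
Definition reaction (n : nat) := (state n * state n)%type.

Definition is_RN (n : nat) (R : reaction n -> Prop) : Prop :=
  forall r, R r -> r.1 <> r.2.

(* r1 (+) r2 = (y1 + 0 \/ (y2 - y1'), y2' + 0 \/ (y1' - y2));
   on naturals, 0 \/ (a - b) is exactly truncated subtraction a - b. *)
Definition oplus (n : nat) (r1 r2 : reaction n) : reaction n :=
  ([ffun i => r1.1 i + maxn 0 (r2.1 i - r1.2 i)],
   [ffun i => r2.2 i + maxn 0 (r1.2 i - r2.1 i)]).

Definition zero_reaction (n : nat) : reaction n := ([ffun => 0], [ffun => 0]).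

Definition cl (n : nat) (A : reaction n -> Prop) : reaction n -> Prop :=
  fun r => exists s : seq (reaction n),
    (forall a, a \in s -> A a) /\ r = foldr (@oplus n) (zero_reaction n) s.

Definition rinv (n : nat) (r : reaction n) : reaction n := (r.2, r.1).

Definition reversible (n : nat) (A : reaction n -> Prop) : Prop :=
  forall r, A r -> A (rinv r).

Definition essential (n : nat) (A : reaction n -> Prop) : Prop :=
  reversible (cl A).

Definition net_change (n : nat) (s : seq (reaction n)) (k : nat) (i : 'I_n) : int :=
  (\sum_(j < k) (Posz ((nth (zero_reaction n) s j).2 i)
                 - Posz ((nth (zero_reaction n) s j).1 i)))%R.

Definition active (n : nat) (s : seq (reaction n)) (x : state n) : Prop :=
  forall k, (k < size s)%N -> forall i : 'I_n,
    (Posz ((nth (zero_reaction n) s k).1 i) <= Posz (x i) + net_change s k i)%R.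

Definition leads_to (n : nat) (R : reaction n -> Prop) (x x' : state n) : Prop :=
  exists s : seq (reaction n),
    (forall r, r \in s -> R r) /\ active s x /\
    forall i : 'I_n, Posz (x' i) = (Posz (x i) + net_change s (size s) i)%R.

(* Main.v *)
Require Import Defs.
From mathcomp Require Import all_boot all_order all_algebra.
From mathcomp Require Import zify.
Import GRing.Theory Num.Theory.

Local Notation F s := (foldr (@oplus _) (zero_reaction _) s).

Lemma oplusA n : associative (@oplus n).
Proof.
move=> [a b] [c d] [e f]; rewrite /oplus /=; congr pair; apply/ffunP=> i;
rewrite !ffunE /=; lia.
Qed.

Lemma oplus0l n (w : reaction n) : oplus (zero_reaction n) w = w.
Proof.
case: w => a b; rewrite /oplus /=; congr pair; apply/ffunP=> i; rewrite !ffunE /=; lia.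
Qed.

Lemma oplus1 n (a b : reaction n) i : (oplus a b).1 i = a.1 i + maxn 0 (b.1 i - a.2 i).
Proof. by rewrite ffunE. Qed.
Lemma oplus2 n (a b : reaction n) i : (oplus a b).2 i = b.2 i + maxn 0 (a.2 i - b.1 i).
Proof. by rewrite ffunE. Qed.

Lemma foldr_op n (s : seq (reaction n)) w :
  foldr (@oplus n) w s = oplus (F s) w.
Proof.
elim: s => [|a s IH] /=; first by rewrite oplus0l.
by rewrite IH oplusA.
Qed.

Lemma F_cat n (s t : seq (reaction n)) : F (s ++ t) = oplus (F s) (F t).
Proof. by rewrite foldr_cat foldr_op. Qed.

Lemma net_change_cons n (r : reaction n) s k i :
  net_change (r :: s) k.+1 i = (Posz (r.2 i) - Posz (r.1 i) + net_change s k i)%R.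
Proof. by rewrite /net_change big_ord_recl. Qed.

Lemma net_change0 n (s : seq (reaction n)) i : net_change s 0 i = 0%R.
Proof. by rewrite /net_change big_ord0. Qed.

Lemma activeP n (s : seq (reaction n)) x :
  active s x <-> forall i, (F s).1 i <= x i.
Proof.
elim: s x => [|r s IH] x.
  by split=> // _ k; rewrite /= ?ffunE /= ?ltn0.
set x' := [ffun i => x i + r.2 i - r.1 i].
split.
- move=> H.
  have H0 : forall i, r.1 i <= x i.
    by move=> i; have := H 0%N isT i; rewrite net_change0 /=; lia.
  have Ha : active s x'.
    move=> k Hk i; have := H k.+1 Hk i; rewrite /= net_change_cons ffunE.
    have := H0 i; lia.
  move/IH: Ha => Ha i; rewrite /= ffunE.
  have := Ha i; have := H0 i; rewrite ffunE; lia.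
- move=> H.
  have H0 : forall i, r.1 i <= x i.
    by move=> i; have := H i; rewrite /= ffunE; lia.
  have Ha : active s x'.
    apply/IH => i; rewrite ffunE; have := H i; rewrite /= ffunE; lia.
  move=> [|k] Hk i /=.
    by rewrite net_change0; have := H0 i; lia.
  rewrite net_change_cons; have := Ha k Hk i; rewrite ffunE; have := H0 i; lia.
Qed.

Lemma netF n (s : seq (reaction n)) i :
  (Posz ((F s).2 i) - Posz ((F s).1 i))%R = net_change s (size s) i.
Proof.
elim: s => [|r s IH] /=; first by rewrite net_change0 !ffunE.
rewrite net_change_cons -IH !ffunE; lia.
Qed.

Theorem proposition3p6 (n : nat) (R : reaction n -> Prop) :
  is_RN R ->
  (essential R <->
   forall x x' : state n, leads_to R x x' -> leads_to R x' x).
Proof.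
move=> _; split.
- move=> Hess x x' [s [Hs [Ha Hx']]].
  have [t [Ht Et]] : cl R (rinv (F s)) by apply: Hess; exists s.
  move/activeP: Ha => Ha.
  exists t; split => //; split.
    apply/activeP => i; rewrite -Et /=.
    have := Hx' i; have := (@netF n s i); have := Ha i; lia.
  move=> i; have := (@netF n t i); rewrite -Et /=.
  have := Hx' i; have := (@netF n s i); lia.
- move=> H r [s [Hs ->]].
  have [t [Ht [Ha Hx]]] : leads_to R (F s).2 (F s).1.
    apply: H; exists s; split => //; split; first by apply/activeP.
    move=> i; rewrite -netF; lia.
  move/activeP: Ha => Ha.
  exists (t ++ s ++ t); split.
    by move=> a; rewrite !mem_cat => /orP[|/orP[]]; [apply: Ht|apply: Hs|apply: Ht].
  rewrite !F_cat /rinv; congr pair; apply/ffunP => i; rewrite !(oplus1, oplus2).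
    have h1 := Hx i; have h2 := (@netF n t i); have h3 := Ha i.
    have h4 : ((F t).2 i + (F s).2 i = (F t).1 i + (F s).1 i)%N by lia.
    have h5 : ((F t).1 i <= (F s).2 i)%N := h3.
    move: h4 h5; set a := (F t).1 i; set b := (F s).2 i; set c := (F s).1 i; set d := (F t).2 i; clearbody a b c d; move: a b c d; clear; move=> a b c d; lia.
  have h1 := Hx i; have h2 := (@netF n t i); have h3 := Ha i.
  have h4 : ((F t).2 i + (F s).2 i = (F t).1 i + (F s).1 i)%N by lia.
  have h5 : ((F t).1 i <= (F s).2 i)%N := h3.
  move: h4 h5; set a := (F t).1 i; set b := (F s).2 i; set c := (F s).1 i; set d := (F t).2 i; clearbody a b c d; move: a b c d; clear; move=> a b c d; lia.
Qed.
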